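(* Let the data $(I,1,c,\{h_a\},S,\{d_a\},\{\chi_a\})$ be as in the context, fix $a\in I$ and an integer $n\ge1$. For $x,y>0$ define $$\mathcal{T}_a(n;x,y)=\frac{\chi_a\!\left(ix+\tfrac1n\right)\,\chi_a\!\left(iy-\tfrac1n\right)}{\chi_a(ix)\,\chi_a(iy)},\qquad \zeta_{n,a}:=\sum_{b\in I}S_{ab}\,d_b\,\theta_b^n .$$ Assume $\zeta_{n,a}\neq0$. Then as $x\to\infty$ and $y\to0^+$ (independently), $\mathcal{T}_a(n;x,y)\ne 0$ eventually and $$\frac{\mathcal{T}_a(n;x,y)}{|\mathcal{T}_a(n;x,y)|}\;\longrightarrow\;e^{\frac{2\pi i}{n}h_a-2\pi i\left(\frac2n+n\right)\frac{c}{24}}\;\frac{\zeta_{n,a}}{|\zeta_{n,a}|},$$ i.e. $\mathcal{T}_a(n;x,y)$ is asymptotically a positive real multiple of $e^{\frac{2\pi i}{n}h_a-2\pi i(\frac2n+n)\frac{c}{24}}\,\zeta_{n,a}$.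
   Context: Data: $I$ is a finite index set with a distinguished element $1$. $c\in\mathbb{R}$. Real numbers $h_a$ ($a\in I$) with $h_1=0$ and $h_a>0$ for $a\neq 1$; set $\theta_a=e^{2\pi i h_a}$. Positive reals $d_a$ ($a\in I$) and $\mathcal{D}=\sqrt{\sum_a d_a^2}$. $S=(S_{ab})_{a,b\in I}$ is a complex matrix with $S_{a1}=S_{1a}=d_a/\mathcal{D}$ for all $a$. The functions $\chi_a$ ($a\in I$) are holomorphic on the upper half-plane $\mathbb{H}$ and have absolutely convergent expansions $\chi_a(\tau)=\sum_{k\ge 0}N_{a,k}\,e^{2\pi i\tau(h_a-c/24+k)}$ with nonnegative integers $N_{a,k}$, $N_{a,0}\ge1$ and $N_{1,0}=1$; they satisfy the modular covariance $\chi_a(-1/\tau)=\sum_b S_{ab}\chi_b(\tau)$ and $\chi_a(\tau+1)=e^{2\pi i(h_a-c/24)}\chi_a(\tau)$ for all $\tau\in\mathbb{H}$. For $a=1$ one has $\zeta_{n,1}=\mathcal{D}^{-1}\sum_b d_b^2\theta_b^n$. *)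

(* Defs.v *)
From Stdlib Require Import Reals.
From Coquelicot Require Import Coquelicot.
Open Scope R_scope.

Fixpoint csum (f : nat -> C) (n : nat) : C :=
  match n with O => RtoC 0 | S m => Cplus (csum f m) (f m) end.
Fixpoint rsum (f : nat -> R) (n : nat) : R :=
  match n with O => 0 | S m => rsum f m + f m end.

(* e2pi z = exp(2 pi i z) for complex z, written out *)
Definition e2pi (z : C) : C :=
  (exp (-(2*PI*Im z)) * cos (2*PI*Re z), exp (-(2*PI*Im z)) * sin (2*PI*Re z)).

Definition holo_on_H (f : C -> C) : Prop :=
  forall z : C, 0 < Im z -> ex_derive (K := C_AbsRing) (V := C_NormedModule) f z.

(* index set I = {0,...,NI-1}; the distinguished element "1" is index 0 *)
Definition Dtot (NI : nat) (d : nat -> R) : R := sqrt (rsum (fun b => d b ^ 2) NI).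

Definition zeta (NI : nat) (S : nat -> nat -> C) (d : nat -> R) (h : nat -> R)
  (n : nat) (a : nat) : C :=
  csum (fun b => Cmult (Cmult (S a b) (RtoC (d b))) (e2pi (RtoC (INR n * h b)))) NI.

Definition Tfun (chi : nat -> C -> C) (a n : nat) (x y : R) : C :=
  Cdiv (Cmult (chi a (1 / INR n, x)) (chi a (- (1 / INR n), y)))
       (Cmult (chi a (0, x)) (chi a (0, y))).

Definition RCFT_data (NI : nat) (c : R) (h : nat -> R) (d : nat -> R)
  (S : nat -> nat -> C) (chi : nat -> C -> C) (Nc : nat -> nat -> nat) : Prop :=
  (0 < NI)%nat /\
  h 0%nat = 0 /\ (forall a, (0 < a < NI)%nat -> 0 < h a) /\
  (forall a, (a < NI)%nat -> 0 < d a) /\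
  (forall a, (a < NI)%nat -> S a 0%nat = RtoC (d a / Dtot NI d) /\
                             S 0%nat a = RtoC (d a / Dtot NI d)) /\
  (forall a, (a < NI)%nat -> holo_on_H (chi a)) /\
  (forall a, (a < NI)%nat -> (1 <= Nc a 0%nat)%nat) /\ Nc 0%nat 0%nat = 1%nat /\
  (forall a tau, (a < NI)%nat -> 0 < Im tau ->
     let term := fun k : nat =>
        Cmult (RtoC (INR (Nc a k))) (e2pi (Cmult tau (RtoC (h a - c/24 + INR k)))) in
     ex_series (fun k => Cmod (term k)) /\ is_series term (chi a tau)) /\
  (forall a tau, (a < NI)%nat -> 0 < Im tau ->
     chi a (Copp (Cinv tau)) = csum (fun b => Cmult (S a b) (chi b tau)) NI) /\
  (forall a tau, (a < NI)%nat -> 0 < Im tau ->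
     chi a (Cplus tau (RtoC 1)) = Cmult (e2pi (RtoC (h a - c/24))) (chi a tau)).

(* Main.v *)
Require Import Defs.
From Stdlib Require Import Reals.
From Coquelicot Require Import Coquelicot.
Open Scope R_scope.
From Stdlib Require Import Lra Lia.

Lemma e2pi_split (z : C) :
  e2pi z = Cmult (RtoC (exp (-(2*PI*Im z)))) (e2pi (RtoC (Re z))).
Proof.
  destruct z as [a b]. unfold e2pi, Cmult, RtoC; simpl.
  rewrite Rmult_0_r, Ropp_0, exp_0. f_equal; ring.
Qed.

Lemma e2pi_add (z w : C) : e2pi (Cplus z w) = Cmult (e2pi z) (e2pi w).
Proof.
  destruct z as [a b], w as [p q]. unfold e2pi, Cmult, Cplus; simpl.
  replace (-(2*PI*(b+q))) with (-(2*PI*b) + -(2*PI*q)) by ring.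
  replace (2*PI*(a+p)) with (2*PI*a + 2*PI*p) by ring.
  rewrite exp_plus, cos_plus, sin_plus. f_equal; ring.
Qed.

Lemma Cmod_e2pi (z : C) : Cmod (e2pi z) = exp (-(2*PI*Im z)).
Proof.
  destruct z as [a b]. unfold Cmod, e2pi; simpl.
  set (e := exp _). set (u := 2*PI*a).
  assert (H := sin2_cos2 u). unfold Rsqr in H.
  replace (e * cos u * (e * cos u * 1) + e * sin u * (e * sin u * 1)) with (e*e)
    by (transitivity (e*e*(sin u * sin u + cos u * cos u)); [rewrite H|]; ring).
  apply sqrt_square. unfold e; left; apply exp_pos.
Qed.

Lemma Cmod_e2pi_R (r : R) : Cmod (e2pi (RtoC r)) = 1.
Proof. rewrite Cmod_e2pi. simpl. rewrite Rmult_0_r, Ropp_0. apply exp_0. Qed.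

Lemma e2pi_0 : e2pi (RtoC 0) = RtoC 1.
Proof. unfold e2pi, RtoC; simpl. rewrite !Rmult_0_r, Ropp_0, exp_0, cos_0, sin_0.
  f_equal; ring. Qed.

Lemma Clim_of_bound {T} (F : (T -> Prop) -> Prop) {FF : Filter F} (f : T -> C) (l : C) :
  (forall eps, 0 < eps -> F (fun x => Cmod (Cminus (f x) l) < eps)) ->
  filterlim f F (locally l).
Proof.
  intros H. apply filterlim_locally. intros eps.
  apply (filter_imp (fun x => Cmod (Cminus (f x) l) < eps)).
  - intros x Hx. apply C_NormedModule_mixin_compat1. exact Hx.
  - apply H, cond_pos.
Qed.

Lemma Clim_to_bound {T} (F : (T -> Prop) -> Prop) {FF : Filter F} (f : T -> C) (l : C) :
  filterlim f F (locally l) ->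
  forall eps, 0 < eps -> F (fun x => Cmod (Cminus (f x) l) < eps).
Proof.
  intros H eps Heps.
  assert (Hs : 0 < sqrt 2) by (apply sqrt_lt_R0; lra).
  assert (He : 0 < eps / sqrt 2) by (apply Rdiv_lt_0_compat; auto).
  pose proof (filterlim_locally (F:=F) f l) as [H1 _].
  apply (filter_imp (fun x => ball l (mkposreal _ He) (f x))).
  2: apply H1; exact H.
  intros x Hx. apply C_NormedModule_mixin_compat2 in Hx. simpl in Hx.
  replace eps with (sqrt 2 * (eps / sqrt 2)) by (field; lra). exact Hx.
Qed.

Lemma Clim_toabs {T} (F : (T -> Prop) -> Prop) {FF : Filter F} (f : T -> C) (l : C) :
  filterlim f F (locally l) -> filterlim (U:=AbsRing_UniformSpace C_AbsRing) f F (@locally (AbsRing_UniformSpace C_AbsRing) l).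
Proof.
  intros H. apply (proj2 (filterlim_locally (F:=F) (U:=AbsRing_UniformSpace C_AbsRing) f l)). intros eps.
  apply (filter_imp (fun x => Cmod (Cminus (f x) l) < eps)).
  - intros x Hx. exact Hx.
  - apply Clim_to_bound; auto. apply cond_pos.
Qed.

Lemma Clim_fromabs {T} (F : (T -> Prop) -> Prop) {FF : Filter F} (f : T -> C) (l : C) :
  filterlim (U:=AbsRing_UniformSpace C_AbsRing) f F (@locally (AbsRing_UniformSpace C_AbsRing) l) -> filterlim f F (locally l).
Proof.
  intros H. apply Clim_of_bound; try exact FF. intros eps Heps.
  pose proof (filterlim_locally (F:=F) (U:=AbsRing_UniformSpace C_AbsRing) f l) as [H1 _].
  specialize (H1 H (mkposreal _ Heps)). exact H1.
Qed.

Lemma Clim_mult {T} (F : (T -> Prop) -> Prop) {FF : Filter F} (f g : T -> C) (l m : C) :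
  filterlim f F (locally l) -> filterlim g F (locally m) ->
  filterlim (fun x => Cmult (f x) (g x)) F (locally (Cmult l m)).
Proof.
  intros Hf0 Hg0. apply Clim_fromabs; try exact FF.
  pose proof (Clim_toabs F f l Hf0) as Hf. pose proof (Clim_toabs F g m Hg0) as Hg.
  eapply (filterlim_comp_2 (G:=@locally (AbsRing_UniformSpace C_AbsRing) l)
     (H:=@locally (AbsRing_UniformSpace C_AbsRing) m) f g (fun a b => mult (K:=C_AbsRing) a b) Hf Hg).
  exact (filterlim_mult (K:=C_AbsRing) l m).
Qed.

Lemma Clim_plus {T} (F : (T -> Prop) -> Prop) {FF : Filter F} (f g : T -> C) (l m : C) :
  filterlim f F (locally l) -> filterlim g F (locally m) ->
  filterlim (fun x => Cplus (f x) (g x)) F (locally (Cplus l m)).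
Proof.
  intros Hf Hg.
  apply (filterlim_comp_2 f g (fun a b => plus (G:=C_AbelianGroup) a b) Hf Hg).
  apply (filterlim_plus (K:=C_AbsRing) (V:=C_NormedModule) l m).
Qed.

Lemma Clim_const {T} (F : (T -> Prop) -> Prop) {FF : Filter F} (l : C) :
  filterlim (fun _ => l) F (locally l).
Proof. apply filterlim_const. Qed.

Lemma Clim_csum {T} (F : (T -> Prop) -> Prop) {FF : Filter F}
  (f : nat -> T -> C) (l : nat -> C) (n : nat) :
  (forall k, (k < n)%nat -> filterlim (f k) F (locally (l k))) ->
  filterlim (fun x => csum (fun k => f k x) n) F (locally (csum l n)).
Proof.
  induction n as [|n IH]; intros H; simpl.
  - apply Clim_const; try exact FF.
  - apply Clim_plus; try exact FF. apply IH; intros; apply H; lia. apply H; lia.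
Qed.

Lemma Clim_inv {T} (F : (T -> Prop) -> Prop) {FF : Filter F} (f : T -> C) (l : C) :
  l <> RtoC 0 -> filterlim f F (locally l) ->
  filterlim (fun x => Cinv (f x)) F (locally (Cinv l)).
Proof.
  intros Hl Hf. apply Clim_of_bound; try exact FF. intros eps Heps.
  assert (Hm : 0 < Cmod l) by (apply Cmod_gt_0; exact Hl).
  set (d := Rmin (Cmod l / 2) (eps * (Cmod l * Cmod l) / 2)).
  assert (Hd : 0 < d).
  { unfold d. apply Rmin_pos. lra. apply Rdiv_lt_0_compat; [|lra].
    apply Rmult_lt_0_compat; [lra| nra]. }
  apply (filter_imp (fun x => Cmod (Cminus (f x) l) < d)).
  2: apply Clim_to_bound; auto.
  intros x Hx.
  assert (Hd1 : d <= Cmod l / 2) by apply Rmin_l.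
  assert (Hd2 : d <= eps * (Cmod l * Cmod l) / 2) by apply Rmin_r.
  assert (Hfx : Cmod l / 2 <= Cmod (f x)).
  { assert (Ht := Cmod_triangle (f x) (Cminus l (f x))).
    replace (Cplus (f x) (Cminus l (f x))) with l in Ht by ring.
    replace (Cminus l (f x)) with (Copp (Cminus (f x) l)) in Ht by ring.
    rewrite Cmod_opp in Ht. lra. }
  assert (Hfx0 : f x <> RtoC 0).
  { intros E. rewrite E, Cmod_0 in Hfx. lra. }
  replace (Cminus (Cinv (f x)) (Cinv l)) with (Cdiv (Copp (Cminus (f x) l)) (Cmult (f x) l))
    by (field; split; auto).
  rewrite Cmod_div, Cmod_opp, Cmod_mult.
  2: { intros E. apply (f_equal Cmod) in E. rewrite Cmod_mult, Cmod_0 in E. nra. }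
  apply Rmult_lt_reg_r with (Cmod (f x) * Cmod l).
  apply Rmult_lt_0_compat; lra.
  unfold Rdiv. rewrite Rmult_assoc, Rinv_l, Rmult_1_r.
  2: { apply Rgt_not_eq. apply Rmult_lt_0_compat; lra. }
  apply Rlt_le_trans with (eps * (Cmod l * Cmod l) / 2). lra.
  assert (0 <= eps * Cmod l) by nra.
  nra.
Qed.

Lemma Cmod_rev (u v : C) : Rabs (Cmod u - Cmod v) <= Cmod (Cminus u v).
Proof.
  assert (H1 := Cmod_triangle (Cminus u v) v).
  assert (H2 := Cmod_triangle (Cminus v u) u).
  replace (Cplus (Cminus u v) v) with u in H1 by ring.
  replace (Cplus (Cminus v u) u) with v in H2 by ring.
  replace (Cminus v u) with (Copp (Cminus u v)) in H2 by ring.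
  rewrite Cmod_opp in H2. apply Rabs_le. lra.
Qed.

Lemma tail_bound (a : nat -> C) (l : C) (b : nat -> R) :
  is_series a l -> ex_series b -> (forall k, 0 <= b k) ->
  (forall k, Cmod (a (S k)) <= b (S k)) ->
  Cmod (Cminus l (a O)) <= Series b.
Proof.
  intros Ha Hb Hb0 Hab.
  assert (Hp : forall N, Cmod (Cminus (sum_n a N) (a O)) <= sum_n b N).
  { induction N as [|N IH].
    - rewrite !sum_O. replace (Cminus (a O) (a O)) with (RtoC 0) by ring.
      rewrite Cmod_0. apply Hb0.
    - rewrite !sum_Sn. change (plus (sum_n b N) (b (S N))) with (sum_n b N + b (S N)).
      change (plus (sum_n a N) (a (S N))) with (Cplus (sum_n a N) (a (S N))).
      replace (Cminus (Cplus (sum_n a N) (a (S N))) (a O))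
        with (Cplus (Cminus (sum_n a N) (a O)) (a (S N))) by ring.
      eapply Rle_trans. apply Cmod_triangle. specialize (Hab N). lra. }
  assert (L1 : is_lim_seq (fun N => Cmod (Cminus (sum_n a N) (a O))) (Cmod (Cminus l (a O)))).
  { apply is_lim_seq_spec. intros eps.
    apply (filter_imp (fun N => Cmod (Cminus (sum_n a N) l) < eps)).
    - intros N HN. eapply Rle_lt_trans. apply Cmod_rev.
      replace (Cminus (Cminus (sum_n a N) (a O)) (Cminus l (a O)))
        with (Cminus (sum_n a N) l) by ring. exact HN.
    - apply Clim_to_bound. apply eventually_filter. exact Ha. apply cond_pos. }
  assert (L2 : is_lim_seq (sum_n b) (Series b)).
  { apply Series_correct in Hb. exact Hb. }
  pose proof (is_lim_seq_le _ _ _ _ Hp L1 L2) as H. simpl in H. exact H.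
Qed.

Lemma decay (K a t0 : R) : 0 <= K -> 0 < a -> forall eps, 0 < eps ->
  exists T, forall t, T < t -> K * exp (-(a*(t - t0))) < eps.
Proof.
  intros HK Ha eps He. exists (t0 + K/(a*eps)). intros t Ht.
  set (u := a*(t-t0)).
  assert (Hu : K/eps < u).
  { unfold u. assert (K/(a*eps) < t - t0) by lra.
    apply Rmult_lt_compat_l with (r:=a) in H; auto.
    replace (a * (K/(a*eps))) with (K/eps) in H by (field; lra). exact H. }
  assert (Hu0 : 0 <= K/eps) by (apply Rdiv_le_0_compat; lra).
  assert (He1 := exp_ineq1_le u).
  rewrite exp_Ropp.
  assert (Hexp : 0 < exp u) by apply exp_pos.
  apply Rmult_lt_reg_r with (exp u); auto.
  rewrite Rmult_assoc, Rinv_l, Rmult_1_r by lra.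
  assert (K < eps * u).
  { apply Rmult_lt_compat_l with (r:=eps) in Hu; auto.
    replace (eps * (K/eps)) with K in Hu by (field; lra). exact Hu. }
  nra.
Qed.

Lemma my_exp_le x y : x <= y -> exp x <= exp y.
Proof. intros [H|H]; [left; apply exp_increasing; auto | subst; lra]. Qed.

Lemma Cmod_term (m : nat) (r t e : R) :
  Cmod (Cmult (RtoC (INR m)) (e2pi (Cmult (r,t) (RtoC e)))) = INR m * exp (-(2*PI*(t*e))).
Proof.
  rewrite Cmod_mult, Cmod_R, Rabs_pos_eq by apply pos_INR.
  rewrite Cmod_e2pi. f_equal. f_equal. f_equal. f_equal. simpl. ring.
Qed.

Lemma Series_nonneg (b : nat -> R) : (forall k, 0 <= b k) -> ex_series b -> 0 <= Series b.
Proof.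
  intros H Hb. replace 0 with (0 * Series b) by ring. rewrite <- Series_scal_l.
  apply Series_le; auto. intros n; specialize (H n); split; lra.
Qed.

Lemma Lasym NI c h d S chi Nc (H : RCFT_data NI c h d S chi Nc) b r : (b < NI)%nat ->
  filterlim (fun t => Cmult (chi b (r,t)) (RtoC (exp (2*PI*t*(h b - c/24)))))
    (Rbar_locally p_infty)
    (locally (Cmult (RtoC (INR (Nc b O))) (e2pi (RtoC (r*(h b - c/24)))))).
Proof.
  intros Hb.
  destruct H as (_&_&_&_&_&_&_&_&H9&_).
  pose proof (H9 b (r,1) Hb ltac:(simpl; lra)) as H1. cbv zeta in H1.
  destruct H1 as [Hex1 _].
  set (tm1 := fun k => Cmod (Cmult (RtoC (INR (Nc b k))) (e2pi (Cmult (r,1) (RtoC (h b - c/24 + INR k)))))).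
  fold tm1 in Hex1.
  set (M := Series tm1).
  assert (HM : 0 <= M) by (apply Series_nonneg; auto; intros; apply Cmod_ge_0).
  refine (Clim_of_bound _ _ _ _). intros eps Heps.
  assert (HK : 0 <= exp (2*PI*(h b - c/24)) * M) by (apply Rmult_le_pos; auto; left; apply exp_pos).
  destruct (decay (exp (2*PI*(h b - c/24)) * M) (2*PI) 1 HK ltac:(pose PI_RGT_0; lra) eps Heps) as [T0 HT0].
  exists (Rmax T0 1). intros t Ht.
  assert (Ht1 : 1 < t) by (eapply Rle_lt_trans; [apply Rmax_r| exact Ht]).
  assert (HtT : T0 < t) by (eapply Rle_lt_trans; [apply Rmax_l| exact Ht]).
  pose proof (H9 b (r,t) Hb ltac:(simpl; lra)) as H2. cbv zeta in H2.
  destruct H2 as [_ Hs].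
  set (K := exp (2*PI*t*(h b - c/24))).
  pose proof (is_series_scal (RtoC K) _ _ Hs) as Hs'.
  set (bnd := fun k => exp (-(2*PI*(t-1))) * exp (2*PI*(h b - c/24)) * tm1 k).
  assert (Hbex : ex_series bnd).
  { apply (ex_series_scal_l (exp (-(2*PI*(t-1))) * exp (2*PI*(h b - c/24))) tm1 Hex1). }
  pose proof (tail_bound _ _ bnd Hs' Hbex) as TB.
  assert (Hser : Series bnd = exp (2*PI*(h b - c/24)) * M * exp (-(2*PI*(t-1)))).
  { unfold bnd. rewrite Series_scal_l. fold M. ring. }
  assert (Hb0 : forall k, 0 <= bnd k).
  { intros k. unfold bnd, tm1. apply Rmult_le_pos. apply Rmult_le_pos; left; apply exp_pos.
    apply Cmod_ge_0. }
  assert (Hbk : forall k, Cmod (scal (RtoC K) (Cmult (RtoC (INR (Nc b (Datatypes.S k))))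
      (e2pi (Cmult (r,t) (RtoC (h b - c/24 + INR (Datatypes.S k))))))) <= bnd (Datatypes.S k)).
  { intros k. unfold bnd, tm1. change (scal (RtoC K) ?z) with (Cmult (RtoC K) z).
    rewrite Cmod_mult, Cmod_R, Rabs_pos_eq by (left; apply exp_pos).
    rewrite !Cmod_term. unfold K.
    set (N := INR (Nc b (Datatypes.S k))). set (k' := INR (Datatypes.S k)).
    assert (Hk' : 1 <= k') by (unfold k'; rewrite S_INR; pose proof (pos_INR k); lra).
    assert (HN : 0 <= N) by apply pos_INR.
    replace (exp (2 * PI * t * (h b - c / 24)) * (N * exp (- (2 * PI * (t * (h b - c / 24 + k'))))))
      with (N * exp (2 * PI * t * (h b - c / 24) + - (2 * PI * (t * (h b - c / 24 + k')))))
      by (rewrite exp_plus; ring).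
    replace (exp (- (2 * PI * (t - 1))) * exp (2 * PI * (h b - c / 24)) *
      (N * exp (- (2 * PI * (1 * (h b - c / 24 + k'))))))
      with (N * exp (- (2 * PI * (t - 1)) + 2 * PI * (h b - c / 24) + - (2 * PI * (1 * (h b - c / 24 + k')))))
      by (rewrite !exp_plus; ring).
    apply Rmult_le_compat_l; auto. apply my_exp_le.
    assert (0 <= (t-1)*(k'-1)) by (apply Rmult_le_pos; lra).
    pose proof PI_RGT_0. nra. }
  specialize (TB Hb0 Hbk).
  rewrite Hser in TB.
  assert (Ha0 : scal (RtoC K) (Cmult (RtoC (INR (Nc b O)))
      (e2pi (Cmult (r,t) (RtoC (h b - c/24 + INR O))))) =
      Cmult (RtoC (INR (Nc b O))) (e2pi (RtoC (r*(h b - c/24))))).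
  { change (scal (RtoC K) ?z) with (Cmult (RtoC K) z).
    match goal with |- ?x = ?y => change (@eq C x y) end.
    rewrite e2pi_split.
    replace (Re (Cmult (r,t) (RtoC (h b - c/24 + INR O)))) with (r*(h b - c/24))
      by (simpl; ring).
    replace (Im (Cmult (r,t) (RtoC (h b - c/24 + INR O)))) with (t*(h b - c/24))
      by (simpl; ring).
    assert (HK1 : Cmult (RtoC K) (RtoC (exp (- (2 * PI * (t * (h b - c / 24)))))) = RtoC 1).
    { rewrite <- RtoC_mult. unfold K. rewrite <- exp_plus.
      replace (2 * PI * t * (h b - c / 24) + - (2 * PI * (t * (h b - c / 24)))) with 0 by ring.
      rewrite exp_0. reflexivity. }
    transitivity (Cmult (Cmult (RtoC K) (RtoC (exp (- (2 * PI * (t * (h b - c / 24)))))))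
      (Cmult (RtoC (INR (Nc b O))) (e2pi (RtoC (r*(h b - c/24)))))).
    ring. rewrite HK1. ring. }
  rewrite <- Ha0. rewrite (Cmult_comm (chi b (r,t))).
  eapply Rle_lt_trans. exact TB. apply HT0. exact HtT.
Qed.

Lemma csum_mult_r (f : nat -> C) (z : C) n :
  Cmult (csum f n) z = csum (fun k => Cmult (f k) z) n.
Proof. induction n; simpl. ring. rewrite <- IHn. ring. Qed.

Lemma csum_mult_l (f : nat -> C) (z : C) n :
  Cmult z (csum f n) = csum (fun k => Cmult z (f k)) n.
Proof. induction n; simpl. ring. rewrite <- IHn. ring. Qed.

Lemma csum_ext (f g : nat -> C) n : (forall k, (k < n)%nat -> f k = g k) -> csum f n = csum g n.
Proof. induction n; intros H; simpl. reflexivity. rewrite IHn, H. reflexivity. lia. intros; apply H; lia. Qed.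

Lemma csum_delta (g : nat -> C) (x : C) n : (0 < n)%nat ->
  csum (fun k => Cmult (g k) (if Nat.eqb k 0 then x else RtoC 0)) n = Cmult (g O) x.
Proof.
  induction n as [|n IH]; intros Hn. lia.
  destruct n as [|n]. simpl. ring.
  change (csum (fun k => Cmult (g k) (if Nat.eqb k 0 then x else RtoC 0)) (Datatypes.S (Datatypes.S n)))
   with (Cplus (csum (fun k => Cmult (g k) (if Nat.eqb k 0 then x else RtoC 0)) (Datatypes.S n))
        (Cmult (g (Datatypes.S n)) (if Nat.eqb (Datatypes.S n) 0 then x else RtoC 0))).
  rewrite IH by lia. simpl. ring.
Qed.

Lemma Mlim NI c h d S chi Nc (H : RCFT_data NI c h d S chi Nc) b r :
  filterlim (fun t => Cmult (csum (fun k => Cmult (S b k) (chi k (r,t))) NI)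
                            (RtoC (exp (2*PI*t*(h O - c/24)))))
    (Rbar_locally p_infty)
    (locally (Cmult (S b O) (e2pi (RtoC (r*(h O - c/24)))))).
Proof.
  pose proof H as H'.
  destruct H' as (HNI&Hh0&Hhpos&_&_&_&_&HN00&_).
  eapply filterlim_ext.
  { intros t. symmetry. apply csum_mult_r. }
  rewrite <- (csum_delta (S b) (e2pi (RtoC (r*(h O - c/24)))) NI HNI).
  refine (Clim_csum _ _ _ _ _). intros k Hk.
  assert (Hkey : forall t, Cmult (Cmult (S b k) (chi k (r,t))) (RtoC (exp (2*PI*t*(h O - c/24)))) =
     Cmult (S b k) (Cmult (Cmult (chi k (r,t)) (RtoC (exp (2*PI*t*(h k - c/24)))))
                          (RtoC (exp (-(2*PI*(h k)*(t - 0))))))).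
  { intros t.
    replace (exp (2*PI*t*(h O - c/24))) with (exp (2*PI*t*(h k - c/24)) * exp (-(2*PI*(h k)*(t - 0)))).
    2: { rewrite <- exp_plus, Hh0. f_equal. ring. }
    rewrite RtoC_mult. ring. }
  apply (filterlim_ext _ _ (fun t => eq_sym (Hkey t))).
  refine (Clim_mult _ _ _ _ _ _ _). refine (Clim_const _ _).
  destruct (Nat.eqb k 0) eqn:Ek.
  - apply Nat.eqb_eq in Ek. subst k.
    replace (e2pi (RtoC (r * (h 0%nat - c / 24)))) with
      (Cmult (Cmult (RtoC (INR (Nc 0%nat 0%nat))) (e2pi (RtoC (r * (h 0%nat - c / 24))))) (RtoC 1)).
    2: { rewrite HN00. simpl. ring. }
    refine (Clim_mult _ _ _ _ _ _ _). apply (Lasym NI c h d S chi Nc H); auto.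
    rewrite Hh0. refine (Clim_of_bound _ _ _ _). intros eps Heps. exists 0. intros t Ht.
    replace (exp (- (2 * PI * 0 * (t - 0)))) with 1.
    2: { replace (- (2 * PI * 0 * (t - 0))) with 0 by ring. rewrite exp_0. reflexivity. }
    replace (Cminus (RtoC 1) (RtoC 1)) with (RtoC 0) by ring. rewrite Cmod_0. exact Heps.
  - apply Nat.eqb_neq in Ek.
    replace (RtoC 0) with (Cmult (Cmult (RtoC (INR (Nc k 0%nat))) (e2pi (RtoC (r * (h k - c / 24))))) (RtoC 0)) by ring.
    refine (Clim_mult _ _ _ _ _ _ _). apply (Lasym NI c h d S chi Nc H); auto.
    assert (Hhk : 0 < h k) by (apply Hhpos; lia).
    refine (Clim_of_bound _ _ _ _). intros eps Heps.
    destruct (decay 1 (2*PI*h k) 0 ltac:(lra) ltac:(pose PI_RGT_0; nra) eps Heps) as [T0 HT0].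
    exists T0. intros t Ht.
    replace (Cminus (RtoC (exp (- (2 * PI * h k * (t - 0))))) (RtoC 0)) with (RtoC (exp (- (2 * PI * h k * (t - 0))))) by ring.
    rewrite Cmod_R, Rabs_pos_eq by (left; apply exp_pos).
    specialize (HT0 t Ht). lra.
Qed.

Lemma sigma_eq (N y : R) : 0 < N -> 0 < y ->
  ((-(1/N)), y) = Copp (Cinv (Cplus (Copp (Cinv (1/N, /(N^2*y)))) (RtoC N))).
Proof.
  intros HN Hy.
  unfold Copp, Cinv, Cplus, RtoC; simpl.
  assert (H1 : 0 < 1/N * (1/N * 1) + / (N * (N * 1) * y) * (/ (N * (N * 1) * y) * 1)).
  { assert (0 < 1/N) by (apply Rdiv_lt_0_compat; lra). nra. }
  f_equal; field; repeat split; try (intro Hc; ring_simplify in Hc; nra); lra.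
Qed.

Lemma sigma0_eq (y : R) : 0 < y -> (0, y) = Copp (Cinv (0, /y)).
Proof.
  intros Hy. unfold Copp, Cinv; simpl.
  f_equal; field; repeat split; try (intro Hc; ring_simplify in Hc; nra); lra.
Qed.

Lemma chi_shift NI c h d S chi Nc (H : RCFT_data NI c h d S chi Nc) b m tau :
  (b < NI)%nat -> 0 < Im tau ->
  chi b (Cplus tau (RtoC (INR m))) = Cmult (e2pi (RtoC (INR m * (h b - c/24)))) (chi b tau).
Proof.
  intros Hb Ht. destruct H as (_&_&_&_&_&_&_&_&_&_&H11). 
  induction m as [|m IH].
  - simpl. rewrite Rmult_0_l, e2pi_0.
    replace (Cplus tau (RtoC 0)) with tau by ring. ring.
  - replace (Cplus tau (RtoC (INR (Datatypes.S m)))) with (Cplus (Cplus tau (RtoC (INR m))) (RtoC 1)).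
    2: { rewrite S_INR, RtoC_plus. ring. }
    rewrite H11; auto. 2: { destruct tau; simpl in *. lra. }
    rewrite IH. rewrite Cmult_assoc, <- e2pi_add, <- RtoC_plus. f_equal. f_equal. f_equal.
    rewrite S_INR. ring.
Qed.

Lemma chi_y NI c h d S chi Nc (H : RCFT_data NI c h d S chi Nc) a n y :
  (a < NI)%nat -> (1 <= n)%nat -> 0 < y ->
  chi a ((-(1/INR n)), y) =
  csum (fun b => Cmult (S a b) (Cmult (e2pi (RtoC (INR n * (h b - c/24))))
     (csum (fun k => Cmult (S b k) (chi k (1/INR n, /(INR n ^2 * y)))) NI))) NI.
Proof.
  intros Ha Hn Hy.
  assert (HN : 0 < INR n) by (apply lt_0_INR; lia).
  pose proof H as H'. destruct H' as (_&_&_&_&_&_&_&_&_&H10&_).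
  set (rho := (1/INR n, /(INR n ^2 * y))).
  assert (HN2 : 0 < INR n ^ 2 * y) by (apply Rmult_lt_0_compat; [apply pow_lt|]; lra).
  assert (Hrho : 0 < Im rho) by (simpl; apply Rinv_0_lt_compat; lra).
  assert (Htau2 : 0 < Im (Copp (Cinv rho))).
  { unfold rho. simpl.
    set (u := 1/INR n). set (t := / (INR n * (INR n * 1) * y)).
    assert (0 < u) by (apply Rdiv_lt_0_compat; lra).
    assert (0 < t) by (unfold t; apply Rinv_0_lt_compat; simpl in HN2; lra).
    assert (0 < u * (u * 1) + t * (t * 1)) by nra.
    replace (- (- t / (u * (u * 1) + t * (t * 1)))) with (t / (u * (u * 1) + t * (t * 1))) by (field; lra).
    apply Rdiv_lt_0_compat; lra. }
  assert (Htau : 0 < Im (Cplus (Copp (Cinv rho)) (RtoC (INR n)))).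
  { simpl. simpl in Htau2. lra. }
  rewrite (sigma_eq (INR n) y HN Hy). fold rho.
  rewrite H10; auto.
  apply csum_ext. intros b Hb. f_equal.
  rewrite (chi_shift NI c h d S chi Nc H); auto.
  rewrite H10; auto.
Qed.

Lemma chi_y0 NI c h d S chi Nc (H : RCFT_data NI c h d S chi Nc) a y :
  (a < NI)%nat -> 0 < y ->
  chi a (0, y) = csum (fun b => Cmult (S a b) (chi b (0, /y))) NI.
Proof.
  intros Ha Hy. pose proof H as H'. destruct H' as (_&_&_&_&_&_&_&_&_&H10&_).
  rewrite (sigma0_eq y Hy). apply H10; auto. simpl. apply Rinv_0_lt_compat; lra.
Qed.

Lemma compose_y (kap : R) (g : R -> C) (l : C) : 0 < kap ->
  filterlim g (Rbar_locally p_infty) (locally l) ->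
  filterlim (fun y => g (/(kap*y))) (at_right 0) (locally l).
Proof.
  intros Hk Hg. eapply filterlim_comp; [|exact Hg].
  intros P [M HM]. unfold filtermap, at_right, within.
  assert (Hd : 0 < 1/(kap*(Rabs M + 1))).
  { apply Rdiv_lt_0_compat. lra. apply Rmult_lt_0_compat; auto. pose proof (Rabs_pos M); lra. }
  exists (mkposreal _ Hd). intros y Hy Hy0.
  change (Rabs (y + - 0) < 1/(kap*(Rabs M + 1))) in Hy.
  rewrite Ropp_0, Rplus_0_r, Rabs_pos_eq in Hy by lra.
  apply HM.
  assert (HM1 : M <= Rabs M) by apply Rle_abs.
  assert (Hky : 0 < kap * y) by (apply Rmult_lt_0_compat; auto).
  assert (kap * y * (Rabs M + 1) < 1).
  { apply Rmult_lt_compat_l with (r := kap) in Hy; auto.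
    replace (kap * (1 / (kap * (Rabs M + 1)))) with (1/(Rabs M + 1)) in Hy
      by (field; pose proof (Rabs_pos M); lra).
    apply Rmult_lt_compat_r with (r := Rabs M + 1) in Hy. 2: pose proof (Rabs_pos M); lra.
    replace (1 / (Rabs M + 1) * (Rabs M + 1)) with 1 in Hy by (field; pose proof (Rabs_pos M); lra).
    lra. }
  apply Rmult_lt_reg_r with (kap * y); auto.
  rewrite Rinv_l by lra. nra.
Qed.

Lemma lift_fst (f : R -> C) (l : C) :
  filterlim f (Rbar_locally p_infty) (locally l) ->
  filterlim (fun p : R * R => f (fst p)) (filter_prod (Rbar_locally p_infty) (at_right 0)) (locally l).
Proof. intros H. eapply filterlim_comp; [apply filterlim_fst | exact H]. Qed.

Lemma lift_snd (f : R -> C) (l : C) :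
  filterlim f (at_right 0) (locally l) ->
  filterlim (fun p : R * R => f (snd p)) (filter_prod (Rbar_locally p_infty) (at_right 0)) (locally l).
Proof. intros H. eapply filterlim_comp; [apply filterlim_snd | exact H]. Qed.

Lemma Clim_nonzero {T} (F : (T -> Prop) -> Prop) {FF : Filter F} (f : T -> C) (l : C) :
  filterlim f F (locally l) -> l <> RtoC 0 -> F (fun x => f x <> RtoC 0).
Proof.
  intros Hf Hl. assert (Hm : 0 < Cmod l) by (apply Cmod_gt_0; exact Hl).
  apply (filter_imp (fun x => Cmod (Cminus (f x) l) < Cmod l)).
  - intros x Hx E. rewrite E in Hx.
    replace (Cminus (RtoC 0) l) with (Copp l) in Hx by ring. rewrite Cmod_opp in Hx. lra.
  - apply Clim_to_bound; auto.
Qed.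

Lemma Clim_normalize {T} (F : (T -> Prop) -> Prop) {FF : Filter F} (f : T -> C) (l : C) :
  filterlim f F (locally l) -> l <> RtoC 0 ->
  filterlim (fun x => Cdiv (f x) (RtoC (Cmod (f x)))) F (locally (Cdiv l (RtoC (Cmod l)))).
Proof.
  intros Hf Hl. assert (Hm : 0 < Cmod l) by (apply Cmod_gt_0; exact Hl).
  unfold Cdiv. refine (Clim_mult _ _ _ _ _ Hf _).
  refine (Clim_inv _ _ _ _ _).
  { intros E. injection E. lra. }
  refine (Clim_of_bound _ _ _ _). intros eps Heps.
  apply (filter_imp (fun x => Cmod (Cminus (f x) l) < eps)).
  - intros x Hx. replace (Cminus (RtoC (Cmod (f x))) (RtoC (Cmod l))) with (RtoC (Cmod (f x) - Cmod l)).
    2: { unfold Cminus, Cplus, Copp, RtoC; simpl. f_equal; ring. }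
    rewrite Cmod_R. eapply Rle_lt_trans. apply Cmod_rev. exact Hx.
  - apply Clim_to_bound; auto.
Qed.

Lemma RtoC_neq0 (x : R) : x <> 0 -> RtoC x <> RtoC 0.
Proof. intros H E. injection E. auto. Qed.

Lemma rsum_pos (f : nat -> R) n : (0 < n)%nat -> (forall k, 0 <= f k) -> 0 < f O -> 0 < rsum f n.
Proof.
  intros Hn Hf H0. induction n as [|n IH]. lia.
  destruct n as [|n]. simpl. lra.
  simpl. simpl in IH. specialize (IH ltac:(lia)). specialize (Hf (Datatypes.S n)). lra.
Qed.

Lemma normalize_scale (T : C) (q : R) : 0 < q -> T <> RtoC 0 ->
  Cdiv (Cmult T (RtoC q)) (RtoC (Cmod (Cmult T (RtoC q)))) = Cdiv T (RtoC (Cmod T)).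
Proof.
  intros Hq HT. rewrite Cmod_mult, Cmod_R, Rabs_pos_eq by lra.
  assert (Hm : 0 < Cmod T) by (apply Cmod_gt_0; exact HT).
  rewrite RtoC_mult. field. split; apply RtoC_neq0; lra.
Qed.

Lemma normalize_phase (th rho : R) (z : C) : 0 < rho -> z <> RtoC 0 ->
  Cdiv (Cmult (e2pi (RtoC th)) (Cmult (RtoC rho) z))
       (RtoC (Cmod (Cmult (e2pi (RtoC th)) (Cmult (RtoC rho) z)))) =
  Cmult (e2pi (RtoC th)) (Cdiv z (RtoC (Cmod z))).
Proof.
  intros Hr Hz. rewrite !Cmod_mult, Cmod_e2pi_R, Cmod_R, Rabs_pos_eq by lra.
  assert (Hm : 0 < Cmod z) by (apply Cmod_gt_0; exact Hz).
  rewrite Rmult_1_l, RtoC_mult. field. split; apply RtoC_neq0; lra.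
Qed.

Theorem mainTheorem2 (NI : nat) (c : R) (h d : nat -> R) (S : nat -> nat -> C)
  (chi : nat -> C -> C) (Nc : nat -> nat -> nat) (a n : nat) :
  RCFT_data NI c h d S chi Nc ->
  (a < NI)%nat -> (1 <= n)%nat ->
  zeta NI S d h n a <> RtoC 0 ->
  filter_prod (Rbar_locally p_infty) (at_right 0)
    (fun p : R * R => Tfun chi a n (fst p) (snd p) <> RtoC 0) /\
  filterlim (fun p : R * R =>
      Cdiv (Tfun chi a n (fst p) (snd p)) (RtoC (Cmod (Tfun chi a n (fst p) (snd p)))))
    (filter_prod (Rbar_locally p_infty) (at_right 0))
    (locally (Cmult (e2pi (RtoC (h a / INR n - (2 / INR n + INR n) * (c / 24))))
                    (Cdiv (zeta NI S d h n a) (RtoC (Cmod (zeta NI S d h n a)))))).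
Proof.
  intros H Ha Hn Hz.
  pose proof H as H'. destruct H' as (HNI&Hh0&Hhpos&Hdpos&HS&_&HNa&HN00&_).
  assert (HN : 0 < INR n) by (apply lt_0_INR; lia).
  assert (HNa' : 0 < INR (Nc a O)) by (apply lt_0_INR; specialize (HNa a Ha); lia).
  assert (HD : 0 < Dtot NI d).
  { unfold Dtot. apply sqrt_lt_R0. apply rsum_pos; auto.
    intros k; apply pow2_ge_0. apply pow_lt. apply Hdpos; auto. }
  assert (Hda : 0 < d a) by auto.
  pose (u1 := fun x => Cmult (chi a (1/INR n, x)) (RtoC (exp (2*PI*x*(h a - c/24))))).
  pose (v1 := fun x => Cmult (chi a (0, x)) (RtoC (exp (2*PI*x*(h a - c/24))))).
  pose (u2 := fun y => Cmult (chi a (-(1/INR n), y)) (RtoC (exp (2*PI*(/(INR n ^ 2 * y))*(h O - c/24))))).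
  pose (v2 := fun y => Cmult (chi a (0, y)) (RtoC (exp (2*PI*(/(1 * y))*(h O - c/24))))).
  pose (L1 := Cmult (RtoC (INR (Nc a O))) (e2pi (RtoC (1/INR n*(h a - c/24))))).
  pose (M1 := Cmult (RtoC (INR (Nc a O))) (e2pi (RtoC (0*(h a - c/24))))).
  pose (L2 := csum (fun b => Cmult (S a b) (Cmult (e2pi (RtoC (INR n * (h b - c/24))))
                 (Cmult (S b O) (e2pi (RtoC (1/INR n * (h O - c/24))))))) NI).
  pose (M2 := Cmult (S a O) (e2pi (RtoC (0*(h O - c/24))))).
  assert (HL1 : filterlim u1 (Rbar_locally p_infty) (locally L1))
    by exact (Lasym NI c h d S chi Nc H a (1/INR n) Ha).
  assert (HM1 : filterlim v1 (Rbar_locally p_infty) (locally M1))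
    by exact (Lasym NI c h d S chi Nc H a 0 Ha).
  assert (HL2 : filterlim u2 (at_right 0) (locally L2)).
  { assert (Hg : filterlim (fun t => csum (fun b => Cmult (S a b) (Cmult (e2pi (RtoC (INR n * (h b - c/24))))
       (Cmult (csum (fun k => Cmult (S b k) (chi k (1/INR n, t))) NI) (RtoC (exp (2*PI*t*(h O - c/24))))))) NI)
       (Rbar_locally p_infty) (locally L2)).
    { refine (Clim_csum _ _ _ _ _). intros b Hb.
      refine (Clim_mult _ _ _ _ _ (Clim_const _ _) _).
      refine (Clim_mult _ _ _ _ _ (Clim_const _ _) _).
      apply (Mlim NI c h d S chi Nc H). }
    assert (Hk : 0 < INR n ^ 2) by (apply pow_lt; lra).
    pose proof (compose_y (INR n ^ 2) _ _ Hk Hg) as Hy.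
    refine (filterlim_ext_loc _ _ _ Hy).
    exists (mkposreal 1 Rlt_0_1). intros y _ Hy0.
    unfold u2. rewrite (chi_y NI c h d S chi Nc H a n y Ha Hn Hy0).
    rewrite csum_mult_r. apply csum_ext. intros b Hb.
    ring. }
  assert (HM2 : filterlim v2 (at_right 0) (locally M2)).
  { pose proof (compose_y 1 _ _ Rlt_0_1 (Mlim NI c h d S chi Nc H a 0)) as Hy.
    refine (filterlim_ext_loc _ _ _ Hy).
    exists (mkposreal 1 Rlt_0_1). intros y _ Hy0.
    unfold v2. rewrite (chi_y0 NI c h d S chi Nc H a y Ha Hy0).
    rewrite (Rmult_1_l y). reflexivity. }
  assert (HM1e : M1 = RtoC (INR (Nc a O))).
  { unfold M1. rewrite Rmult_0_l, e2pi_0. ring. }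
  assert (HM2e : M2 = RtoC (d a / Dtot NI d)).
  { unfold M2. rewrite Rmult_0_l, e2pi_0, (proj1 (HS a Ha)). ring. }
  assert (HM1n : M1 <> RtoC 0) by (rewrite HM1e; apply RtoC_neq0; lra).
  assert (HM2n : M2 <> RtoC 0).
  { rewrite HM2e; apply RtoC_neq0. apply Rgt_not_eq. apply Rdiv_lt_0_compat; lra. }
  assert (HM12 : Cmult M1 M2 <> RtoC 0).
  { rewrite HM1e, HM2e, <- RtoC_mult. apply RtoC_neq0. apply Rgt_not_eq.
    apply Rmult_lt_0_compat; auto. apply Rdiv_lt_0_compat; lra. }
  set (th := h a / INR n - (2 / INR n + INR n) * (c / 24)).
  set (zt := zeta NI S d h n a).
  assert (HL2e : L2 = Cmult (e2pi (RtoC (INR n * (-(c/24)) + 1/INR n * (h O - c/24))))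
                         (Cmult (RtoC (/ Dtot NI d)) zt)).
  { unfold L2, zt, zeta. rewrite csum_mult_l, csum_mult_l. apply csum_ext. intros b Hb.
    rewrite (proj1 (HS b Hb)).
    replace (INR n * (h b - c/24)) with (INR n * h b + INR n * (-(c/24))) by ring.
    rewrite !RtoC_plus, !e2pi_add.
    replace (RtoC (d b / Dtot NI d)) with (Cmult (RtoC (d b)) (RtoC (/ Dtot NI d)))
      by (rewrite <- RtoC_mult; reflexivity).
    match goal with |- ?x = ?y => change (@eq C x y) end. ring. }
  pose (Z := Cmult (Cmult L1 L2) (Cinv (Cmult M1 M2))).
  assert (HZe : Z = Cmult (e2pi (RtoC th)) (Cmult (RtoC (/ d a)) zt)).
  { unfold Z. rewrite HL2e, HM1e, HM2e. unfold L1.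
    replace (e2pi (RtoC th)) with (Cmult (e2pi (RtoC (1/INR n*(h a - c/24))))
       (e2pi (RtoC (INR n * (-(c/24)) + 1/INR n * (h O - c/24))))).
    2: { rewrite <- e2pi_add, <- RtoC_plus. f_equal. f_equal. unfold th. rewrite Hh0. field. lra. }
    rewrite RtoC_inv, RtoC_div, RtoC_inv by lra.
    field. repeat split; apply RtoC_neq0; lra. }
  assert (HZn : Z <> RtoC 0).
  { rewrite HZe. intros E. apply (f_equal Cmod) in E.
    rewrite !Cmod_mult, Cmod_e2pi_R, Cmod_R, Rabs_pos_eq, Cmod_0 in E.
    2: { left. apply Rinv_0_lt_compat. lra. }
    assert (0 < Cmod zt) by (apply Cmod_gt_0; exact Hz).
    assert (0 < / d a) by (apply Rinv_0_lt_compat; lra). nra. }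
  pose (zf := fun p : R * R => Cmult (Cmult (u1 (fst p)) (u2 (snd p)))
                                    (Cinv (Cmult (v1 (fst p)) (v2 (snd p))))).
  assert (HZ : filterlim zf (filter_prod (Rbar_locally p_infty) (at_right 0)) (locally Z)).
  { unfold zf, Z.
    refine (Clim_mult _ _ _ _ _ _ _).
    - refine (Clim_mult _ _ _ _ _ _ _). apply lift_fst; exact HL1. apply lift_snd; exact HL2.
    - refine (Clim_inv _ _ _ HM12 _).
      refine (Clim_mult _ _ _ _ _ _ _). apply lift_fst; exact HM1. apply lift_snd; exact HM2. }
  assert (EV : filter_prod (Rbar_locally p_infty) (at_right 0)
     (fun p => (v1 (fst p) <> RtoC 0 /\ (0 < snd p /\ v2 (snd p) <> RtoC 0)) /\ zf p <> RtoC 0)).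
  { apply filter_and.
    - apply (Filter_prod _ _ _ (fun x => v1 x <> RtoC 0) (fun y => 0 < y /\ v2 y <> RtoC 0)).
      + exact (Clim_nonzero _ _ _ HM1 HM1n).
      + apply filter_and. exists (mkposreal 1 Rlt_0_1). intros y _ Hy; exact Hy.
        exact (Clim_nonzero _ _ _ HM2 HM2n).
      + intros x y Hx Hy. simpl. tauto.
    - exact (Clim_nonzero _ _ _ HZ HZn). }
  assert (KEY : forall p : R * R, (v1 (fst p) <> RtoC 0 /\ (0 < snd p /\ v2 (snd p) <> RtoC 0)) /\ zf p <> RtoC 0 ->
     Tfun chi a n (fst p) (snd p) <> RtoC 0 /\
     Cdiv (zf p) (RtoC (Cmod (zf p))) =
     Cdiv (Tfun chi a n (fst p) (snd p)) (RtoC (Cmod (Tfun chi a n (fst p) (snd p))))).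
  { intros [x y] [[Hv1 [Hy Hv2]] Hzf]. simpl in *.
    set (k1 := exp (2*PI*x*(h a - c/24))).
    set (k2 := exp (2*PI*(/(INR n ^ 2 * y))*(h O - c/24))).
    set (k3 := exp (2*PI*(/(1 * y))*(h O - c/24))).
    assert (Hk1 : 0 < k1) by apply exp_pos.
    assert (Hk2 : 0 < k2) by apply exp_pos.
    assert (Hk3 : 0 < k3) by apply exp_pos.
    assert (HC : chi a (0,x) <> RtoC 0).
    { intros E. apply Hv1. unfold v1. fold k1. rewrite E. ring. }
    assert (HDd : chi a (0,y) <> RtoC 0).
    { intros E. apply Hv2. unfold v2. fold k3. rewrite E. ring. }
    assert (Hrel : zf (x,y) = Cmult (Tfun chi a n x y) (RtoC (k2 / k3))).
    { unfold zf, u1, u2, v1, v2, Tfun. cbn [fst snd]. fold k1 k2 k3.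
      rewrite RtoC_div by lra.
      match goal with |- ?x = ?y => change (@eq C x y) end.
      generalize (chi a (1 / INR n, x)) (chi a (-(1 / INR n), y)).
      clear HL1 HL2 HM1 HM2 HZ EV. revert HC HDd.
      generalize (chi a (0, x)) (chi a (0, y)). intros.
      change (exp (2 * PI * / (INR n * (INR n * 1) * y) * (h 0%nat - c / 24))) with k2.
      clearbody k1 k2 k3. field.
      repeat split; auto; apply RtoC_neq0; lra. }
    assert (HT : Tfun chi a n x y <> RtoC 0).
    { intros E. apply Hzf. rewrite Hrel, E. ring. }
    split; auto.
    rewrite Hrel. apply normalize_scale; auto. apply Rdiv_lt_0_compat; lra. }
  split.
  - apply (filter_imp _ _ (fun p Hp => proj1 (KEY p Hp)) EV).
  - refine (filterlim_ext_loc _ _ (filter_imp _ _ (fun p Hp => proj2 (KEY p Hp)) EV) _).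
    fold th zt.
    rewrite <- (normalize_phase th (/ d a) zt) by (auto; apply Rinv_0_lt_compat; lra).
    rewrite <- HZe.
    refine (Clim_normalize _ _ _ HZ HZn).
Qed.
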